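(* Let $G$ be an additive group and let $X$, $\preceq$, $\rho$ be as described below. Then the metric space $(X,\rho)$ is geodesic and $(X,\rho,\preceq)$ is a metric $\vee$-semilattice.
   Context: A function on an interval $(\alpha,\beta)$ is piecewise constant from the left if for every $x$ there is $\varepsilon>0$ with $f$ constant on $[x-\varepsilon,x]$. $X$ is the set of pairs $(f,a_f)$, $a_f>0$ real, $f:(a_f,+\infty)\to G$ piecewise constant from the left with $f|_{(b_f,+\infty)}\equiv0$ for some $b_f\ge a_f$. Order: $(f,a_f)\preceq(g,a_g)$ iff $a_f\le a_g$ and $f|_{(a_g,+\infty)}=g$; $(X,\preceq)$ is a $\vee$-semilattice, with supremum denoted $p\vee q$. Metric: $\rho((f,a_f),(g,a_g))=|a_f-a_g|$ if the two pairs are comparable, and $\rho(p,q)=\rho(p,p\vee q)+\rho(p\vee q,q)$ if $p,q$ are incomparable. A metric space is geodesic if any two points are joined by a segment (an isometric image of a real segment). $(X,\rho,\preceq)$ is a metric $\vee$-semilattice if (1) $x\preceq z\preceq y$ implies $\rho(x,z)+\rho(z,y)=\rho(x,y)$, and (2) $\rho(x,y)=\rho(x,x\vee y)+\rho(x\vee y,y)$ for all $x,y$. *)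

(* Defs.v *)
From mathcomp Require Import ssreflect ssrfun ssrbool eqtype ssralg.
From Stdlib Require Import Reals ClassicalEpsilon.
Set Implicit Arguments. Unset Strict Implicit.
Local Open Scope R_scope.

(* The function f : (a_f,+oo) -> G is encoded as a
   total function R -> G normalized to be 0 outside its domain (x <= a_f),
   so that equality of elements of X is equality of pairs (f, a_f). *)
Record Xel (G : zmodType) := MkX {
  xa : R;
  xf : R -> G;
  xa_pos : 0 < xa;
  xf_out : forall x, x <= xa -> xf x = GRing.zero;
  xf_plc : forall x, xa < x -> exists eps, 0 < eps /\ xa < x - eps /\
             forall y, x - eps <= y <= x -> xf y = xf x;
  xf_zero : exists b, xa <= b /\ forall x, b < x -> xf x = GRing.zero
}.

Definition Xle (G : zmodType) (p q : Xel G) : Prop :=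
  xa p <= xa q /\ forall x, xa q < x -> xf p x = xf q x.

Definition Xcomparable (G : zmodType) (p q : Xel G) : Prop :=
  Xle p q \/ Xle q p.

Definition is_sup (T : Type) (le : T -> T -> Prop) (p q j : T) : Prop :=
  le p j /\ le q j /\ forall u, le p u -> le q u -> le j u.

(* p \/ q : the supremum (chosen by classical choice; it exists, see lemma5) *)
Definition Xjoin (G : zmodType) (p q : Xel G) : Xel G :=
  epsilon (inhabits p) (is_sup (@Xle G) p q).

Definition Xrho (G : zmodType) (p q : Xel G) : R :=
  if excluded_middle_informative (Xcomparable p q) then Rabs (xa p - xa q)
  else Rabs (xa p - xa (Xjoin p q)) + Rabs (xa (Xjoin p q) - xa q).

Definition partial_order (T : Type) (le : T -> T -> Prop) : Prop :=
  (forall x, le x x) /\ (forall x y, le x y -> le y x -> x = y) /\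
  (forall x y z, le x y -> le y z -> le x z).

Definition join_semilattice (T : Type) (le : T -> T -> Prop) : Prop :=
  partial_order le /\ forall x y, exists j, is_sup le x y j.

Definition metric (T : Type) (d : T -> T -> R) : Prop :=
  (forall x y, d x y = 0 <-> x = y) /\ (forall x y, d x y = d y x) /\
  (forall x y z, d x z <= d x y + d y z).

Definition geodesic (T : Type) (d : T -> T -> R) : Prop :=
  forall x y, exists g : R -> T, g 0 = x /\ g (d x y) = y /\
    forall s t, 0 <= s <= d x y -> 0 <= t <= d x y ->
      d (g s) (g t) = Rabs (s - t).

Definition metric_join_semilattice (T : Type) (d : T -> T -> R)
    (le : T -> T -> Prop) (join : T -> T -> T) : Prop :=
  (forall x y z, le x z -> le z y -> d x z + d z y = d x y) /\
  (forall x y, d x y = d x (join x y) + d (join x y) y).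

(* Main.v *)
Require Import Defs.
From mathcomp Require Import ssreflect ssralg.
From Stdlib Require Import Reals Lra Classical ClassicalEpsilon FunctionalExtensionality ProofIrrelevance.
Set Implicit Arguments. Unset Strict Implicit.
Local Open Scope R_scope.

Lemma Xel_eq (G : zmodType) (p q : Xel G) :
  xa p = xa q -> (forall x, xf p x = xf q x) -> p = q.
Proof.
destruct p as [a f h1 h2 h3 h4], q as [a' f' h1' h2' h3' h4']; simpl.
intros Ha Hf. subst a'.
assert (f = f') by (apply functional_extensionality; exact Hf). subst f'.
f_equal; apply proof_irrelevance.
Qed.

Lemma Xle_refl (G : zmodType) (p : Xel G) : Xle p p.
Proof. split; [lra| auto]. Qed.

Lemma Xle_trans (G : zmodType) (p q r : Xel G) : Xle p q -> Xle q r -> Xle p r.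
Proof.
intros [h1 h2] [h3 h4]; split; [lra|].
intros x hx. rewrite h2; [|lra]. auto.
Qed.

Lemma Xle_eqa (G : zmodType) (p q : Xel G) : Xle p q -> xa p = xa q -> p = q.
Proof.
intros [h1 h2] e. apply Xel_eq; auto.
intros x. destruct (Rle_dec x (xa q)) as [hx|hx].
- rewrite xf_out; [|lra]. rewrite xf_out; [|lra]. reflexivity.
- apply h2; lra.
Qed.

Lemma Xle_antisym (G : zmodType) (p q : Xel G) : Xle p q -> Xle q p -> p = q.
Proof. intros h1 h2. apply Xle_eqa; auto. destruct h1, h2; lra. Qed.

Lemma Xle_chain (G : zmodType) (q u v : Xel G) :
  Xle q u -> Xle q v -> xa u <= xa v -> Xle u v.
Proof.
intros [h1 h2] [h3 h4] h. split; auto.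
intros x hx. rewrite -h2; [|lra]. auto.
Qed.

Definition tlev (G : zmodType) (p : Xel G) t := Rmax (xa p) t.
Definition tfun (G : zmodType) (p : Xel G) t : R -> G :=
  fun x => match Rle_dec x (tlev p t) with left _ => GRing.zero | right _ => xf p x end.

Lemma t_pos (G : zmodType) (p : Xel G) t : 0 < tlev p t.
Proof. unfold tlev. pose proof (Rmax_l (xa p) t). pose proof (xa_pos p). lra. Qed.

Lemma t_out (G : zmodType) (p : Xel G) t : forall x, x <= tlev p t -> tfun p t x = GRing.zero.
Proof. intros x hx. unfold tfun. destruct Rle_dec; [reflexivity|contradiction]. Qed.

Lemma t_above (G : zmodType) (p : Xel G) t x : tlev p t < x -> tfun p t x = xf p x.
Proof. intros hx. unfold tfun. destruct Rle_dec; [lra|reflexivity]. Qed.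

Lemma t_plc (G : zmodType) (p : Xel G) t : forall x, tlev p t < x -> exists eps, 0 < eps /\ tlev p t < x - eps /\
             forall y, x - eps <= y <= x -> tfun p t y = tfun p t x.
Proof.
intros x hx. pose proof (Rmax_l (xa p) t) as hl. fold (tlev p t) in hl.
destruct (@xf_plc _ p x) as [eps [e1 [e2 e3]]]; [lra|].
exists (Rmin eps ((x - tlev p t)/2)).
pose proof (Rmin_l eps ((x - tlev p t)/2)). pose proof (Rmin_r eps ((x - tlev p t)/2)).
assert (0 < Rmin eps ((x - tlev p t)/2)).
{ unfold Rmin; destruct Rle_dec; lra. }
split; [lra|split; [lra|]].
intros y hy. rewrite t_above; [|lra]. rewrite t_above; [|lra]. apply e3; lra.
Qed.

Lemma t_zero (G : zmodType) (p : Xel G) t : exists b, tlev p t <= b /\ forall x, b < x -> tfun p t x = GRing.zero.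
Proof.
destruct (xf_zero p) as [b [b1 b2]].
exists (Rmax (tlev p t) b). split; [apply Rmax_l|].
intros x hx. pose proof (Rmax_l (tlev p t) b). pose proof (Rmax_r (tlev p t) b).
rewrite t_above; [|lra]. apply b2; lra.
Qed.

Definition trunc (G : zmodType) (p : Xel G) t : Xel G :=
  @MkX G (tlev p t) (tfun p t) (@t_pos G p t) (@t_out G p t) (@t_plc G p t) (@t_zero G p t).

Lemma trunc_a (G : zmodType) (p : Xel G) t : xa p <= t -> xa (trunc p t) = t.
Proof. intros h. simpl. unfold tlev, Rmax. destruct Rle_dec; lra. Qed.

Lemma trunc_self (G : zmodType) (p : Xel G) : trunc p (xa p) = p.
Proof.
apply Xle_eqa.
- split; simpl.
  + unfold tlev, Rmax; destruct Rle_dec; lra.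
  + intros x hx. apply t_above. unfold tlev, Rmax; destruct Rle_dec; lra.
- apply trunc_a; lra.
Qed.

Lemma le_trunc (G : zmodType) (p : Xel G) t : Xle p (trunc p t).
Proof. split; simpl. apply Rmax_l. intros x hx. rewrite t_above; auto. Qed.

Lemma trunc_le (G : zmodType) (p u : Xel G) t : Xle p u -> t <= xa u -> Xle (trunc p t) u.
Proof.
intros [h1 h2] h. split; simpl.
- unfold tlev. apply Rmax_lub; auto.
- intros x hx. rewrite t_above. apply h2; auto.
  unfold tlev. pose proof (Rmax_lub (xa p) t (xa u) h1 h). unfold tlev in *. lra.
Qed.

Lemma trunc_mono (G : zmodType) (p : Xel G) s t : xa p <= s -> s <= t -> Xle (trunc p s) (trunc p t).
Proof.
intros h1 h2. apply trunc_le. apply le_trunc. rewrite trunc_a; lra.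
Qed.

Lemma trunc_join (G : zmodType) (p j : Xel G) : Xle p j -> trunc p (xa j) = j.
Proof.
intros h. apply Xle_eqa. apply trunc_le; auto; lra.
apply trunc_a. destruct h; auto.
Qed.

Lemma join_exists (G : zmodType) (p q : Xel G) : exists j, is_sup (@Xle G) p q j.
Proof.
set m := Rmax (xa p) (xa q).
pose proof (Rmax_l (xa p) (xa q)) as mp. pose proof (Rmax_r (xa p) (xa q)) as mq. fold m in mp, mq.
set S := fun x => x = m \/ (m < x /\ xf p x <> xf q x).
destruct (xf_zero p) as [bp [bp1 bp2]]. destruct (xf_zero q) as [bq [bq1 bq2]].
assert (HB : bound S).
{ exists (Rmax m (Rmax bp bq)). intros x [hx|[hx1 hx2]].
  - subst x. apply Rmax_l.
  - destruct (Rle_dec x (Rmax m (Rmax bp bq))) as [h|h]; auto. exfalso.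
    pose proof (Rmax_r m (Rmax bp bq)). pose proof (Rmax_l bp bq). pose proof (Rmax_r bp bq).
    apply hx2. rewrite bp2; [|lra]. rewrite bq2; [|lra]. reflexivity. }
destruct (completeness S HB (ex_intro _ m (or_introl eq_refl))) as [c [c1 c2]].
assert (cm : m <= c) by (apply c1; left; reflexivity).
assert (agree : forall x, c < x -> xf p x = xf q x).
{ intros x hx. apply NNPP. intros hn. assert (S x) by (right; split; [lra|auto]).
  pose proof (c1 x H). lra. }
exists (trunc p c). split; [|split].
- apply le_trunc.
- split. rewrite trunc_a; lra.
  intros x hx. rewrite trunc_a in hx; [|lra]. simpl. rewrite t_above.
  + symmetry; apply agree; lra.
  + unfold tlev, Rmax; destruct Rle_dec; lra.
- intros u hpu hqu. apply trunc_le; auto. apply c2.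
  intros x [hx|[hx1 hx2]].
  + subst x. destruct hpu, hqu. unfold m, Rmax; destruct Rle_dec; lra.
  + destruct (Rle_dec x (xa u)) as [h|h]; auto. exfalso. apply hx2.
    destruct hpu as [_ h1], hqu as [_ h2]. rewrite h1; [|lra]. rewrite h2; [|lra]. reflexivity.
Qed.

Lemma Xjoin_spec (G : zmodType) (p q : Xel G) : is_sup (@Xle G) p q (Xjoin p q).
Proof. unfold Xjoin. apply epsilon_spec. apply join_exists. Qed.

Lemma sup_unique (G : zmodType) (p q j : Xel G) : is_sup (@Xle G) p q j -> Xjoin p q = j.
Proof.
intros [h1 [h2 h3]]. destruct (Xjoin_spec p q) as [k1 [k2 k3]].
apply Xle_antisym; auto.
Qed.

Lemma Xjoin_le (G : zmodType) (p q : Xel G) : Xle p q -> Xjoin p q = q.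
Proof. intros h. apply sup_unique. split; [auto|split; [apply Xle_refl|auto]]. Qed.

Lemma Xjoin_comm (G : zmodType) (p q : Xel G) : Xjoin p q = Xjoin q p.
Proof. apply sup_unique. destruct (Xjoin_spec q p) as [k1 [k2 k3]]. split; [auto|split; auto]. Qed.

Lemma rho_eq (G : zmodType) (p q : Xel G) :
  Xrho p q = (xa (Xjoin p q) - xa p) + (xa (Xjoin p q) - xa q).
Proof.
unfold Xrho. case: excluded_middle_informative => [[h|h]|h] /=.
- rewrite Xjoin_le; auto. destruct h. rewrite Rabs_left1; lra.
- rewrite Xjoin_comm Xjoin_le; auto. destruct h. rewrite Rabs_right; lra.
- destruct (Xjoin_spec p q) as [[k1 _] [[k2 _] _]].
  rewrite Rabs_left1; [|lra]. rewrite Rabs_right; lra.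
Qed.

Lemma rho_le (G : zmodType) (p q : Xel G) : Xle p q -> Xrho p q = xa q - xa p.
Proof. intros h. rewrite rho_eq Xjoin_le; auto. lra. Qed.

Lemma rho_sym (G : zmodType) (p q : Xel G) : Xrho p q = Xrho q p.
Proof. rewrite !rho_eq Xjoin_comm. lra. Qed.

Lemma rho_tri (G : zmodType) (p q r : Xel G) : Xrho p r <= Xrho p q + Xrho q r.
Proof.
rewrite !rho_eq.
destruct (Xjoin_spec p q) as [a1 [a2 a3]]. destruct (Xjoin_spec q r) as [b1 [b2 b3]].
destruct (Xjoin_spec p r) as [c1 [c2 c3]].
assert (xa (Xjoin p r) + xa q <= xa (Xjoin p q) + xa (Xjoin q r)).
{ destruct (Rle_dec (xa (Xjoin p q)) (xa (Xjoin q r))) as [h|h].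
  - assert (Xle (Xjoin p q) (Xjoin q r)) by (apply (Xle_chain a2 b1 h)).
    assert (Xle (Xjoin p r) (Xjoin q r)) by (apply c3; [exact (Xle_trans a1 H)|exact b2]).
    destruct H0, a2. lra.
  - assert (Xle (Xjoin q r) (Xjoin p q)) by (apply (Xle_chain b1 a2); lra).
    assert (Xle (Xjoin p r) (Xjoin p q)) by (apply c3; [exact a1|exact (Xle_trans b2 H)]).
    destruct H0, b1. lra. }
lra.
Qed.

Lemma rho_zero (G : zmodType) (p q : Xel G) : Xrho p q = 0 <-> p = q.
Proof.
split.
- rewrite rho_eq. intros h.
  destruct (Xjoin_spec p q) as [a1 [a2 a3]].
  pose proof a1 as [e1 _]. pose proof a2 as [e2 _].
  assert (E1 := Xle_eqa a1). assert (E2 := Xle_eqa a2).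
  assert (F1 : p = Xjoin p q) by (apply E1; lra).
  assert (F2 : q = Xjoin p q) by (apply E2; lra).
  congruence.
- intros <-. rewrite rho_le; [lra|apply Xle_refl].
Qed.

Lemma rho_trunc_same (G : zmodType) (p : Xel G) l1 l2 :
  xa p <= l1 -> xa p <= l2 -> Xrho (trunc p l1) (trunc p l2) = Rabs (l1 - l2).
Proof.
intros h1 h2. destruct (Rle_dec l1 l2) as [h|h].
- rewrite rho_le; [|apply trunc_mono; auto]. rewrite !trunc_a; auto.
  rewrite Rabs_left1; lra.
- rewrite rho_sym rho_le; [|apply trunc_mono; auto; lra]. rewrite !trunc_a; auto.
  rewrite Rabs_right; lra.
Qed.

Lemma rho_cross (G : zmodType) (p q : Xel G) l1 l2 :
  xa p <= l1 <= xa (Xjoin p q) -> xa q <= l2 <= xa (Xjoin p q) ->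
  Xrho (trunc p l1) (trunc q l2) = (xa (Xjoin p q) - l1) + (xa (Xjoin p q) - l2).
Proof.
intros h1 h2. destruct (Xjoin_spec p q) as [a1 [a2 a3]].
rewrite rho_eq.
assert (E : Xjoin (trunc p l1) (trunc q l2) = Xjoin p q).
{ apply sup_unique. split; [|split].
  - apply trunc_le; auto; lra.
  - apply trunc_le; auto; lra.
  - intros u hu1 hu2. apply a3.
    + exact (Xle_trans (le_trunc p l1) hu1).
    + exact (Xle_trans (le_trunc q l2) hu2). }
rewrite E. rewrite !trunc_a; lra.
Qed.

Lemma geo (G : zmodType) : geodesic (@Xrho G).
Proof.
intros p q.
destruct (Xjoin_spec p q) as [a1 [a2 a3]].
pose proof a1 as [e1 _]. pose proof a2 as [e2 _].
set J := Xjoin p q in a1 a2 a3 e1 e2.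
set A := xa J - xa p.
assert (Hd : Xrho p q = A + (xa J - xa q)) by (rewrite rho_eq; unfold A, J; lra).
set d := Xrho p q in Hd |- *.
set g := fun s => match Rle_dec s A with left _ => trunc p (xa p + s) | right _ => trunc q (xa q + d - s) end.
assert (TJ : trunc p (xa J) = trunc q (xa J)).
{ rewrite (trunc_join a1) (trunc_join a2). reflexivity. }
assert (G1 : forall s, s <= A -> g s = trunc p (xa p + s)).
{ intros s hs. unfold g. destruct Rle_dec; [reflexivity|contradiction]. }
assert (G2 : forall s, A <= s -> g s = trunc q (xa q + d - s)).
{ intros s hs. unfold g. destruct Rle_dec as [h|h]; [|reflexivity].
  assert (s = A) by lra. subst s.
  replace (xa p + A) with (xa J) by (unfold A; lra).
  replace (xa q + d - A) with (xa J) by lra. exact TJ. }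
exists g. split; [|split].
- rewrite G1; [|unfold A; lra]. rewrite Rplus_0_r. apply trunc_self.
- rewrite G2; [|lra]. replace (xa q + d - d) with (xa q) by lra. apply trunc_self.
- intros s t hs ht.
  destruct (Rle_dec s A) as [sA|sA]; destruct (Rle_dec t A) as [tA|tA].
  + rewrite (G1 s sA) (G1 t tA) rho_trunc_same; try lra.
    f_equal; lra.
  + rewrite (G1 s sA) (G2 t); [|lra]. rewrite rho_cross; unfold J; fold J; try (unfold A in *; lra).
    rewrite Rabs_left1; unfold A in *; lra.
  + rewrite (G2 s) ?(G1 t tA); [|lra]. rewrite rho_sym rho_cross; unfold J; fold J; try (unfold A in *; lra).
    rewrite Rabs_right; unfold A in *; lra.
  + rewrite (G2 s) ?(G2 t); try lra. rewrite rho_trunc_same; try lra.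
    rewrite Rabs_minus_sym; f_equal; lra.
Qed.

Theorem lemma5 (G : zmodType) :
  join_semilattice (@Xle G) /\
  (forall p q : Xel G, is_sup (@Xle G) p q (Xjoin p q)) /\
  metric (@Xrho G) /\
  geodesic (@Xrho G) /\
  metric_join_semilattice (@Xrho G) (@Xle G) (@Xjoin G).
Proof.
split; [|split; [|split; [|split]]].
- split. split; [|split].
  + intros x; apply Xle_refl.
  + intros x y; apply Xle_antisym.
  + intros x y z; apply Xle_trans.
  + intros x y. exists (Xjoin x y). apply Xjoin_spec.
- intros p q. apply Xjoin_spec.
- split; [|split].
  + intros x y. apply rho_zero.
  + intros x y. apply rho_sym.
  + intros x y z. apply rho_tri.
- apply geo.
- split.
  + intros x y z h1 h2. rewrite !rho_le; auto. lra. exact (Xle_trans h1 h2).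
  + intros x y. destruct (Xjoin_spec x y) as [a1 [a2 _]].
    rewrite (rho_le a1) (rho_sym (Xjoin x y) y) (rho_le a2) rho_eq. lra.
Qed.
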